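(* Fix a ROMDP satisfying Assumptions 1 and 2 below, a deterministic observation-based policy $\pi$, and an action $l\in[A]$. Let $M_2^{(l)}=U\Sigma U^{\mathsf T}$ be an eigendecomposition of the second moment $M_2^{(l)}$. If all nonzero eigenvalues of $M_2^{(l)}$ have multiplicity 1, then there exist a mapping $\sigma^{(l)}:\mathcal X\to\mathcal X$ and multiplicative constants $\{C_i^{(l)}\}_{i\in[X]}$ such that for every $i\in\mathcal X_\pi^{(l)}$ and $j\in[Y]$, $[V_2^{(l)}]_{j,\sigma^{(l)}(i)}=C_i^{(l)}[U]_{j,i}$ (indexing the eigenvectors of nonzero eigenvalues by $i\in\mathcal X_\pi^{(l)}$). Consequently, defining for each $i\in\mathcal X_\pi^{(l)}$ the cluster $\widetilde{\mathcal Y}_i^{(l)}=\{j\in[Y]:[U]_{j,i}>0\}$, if $j,j'\in\widetilde{\mathcal Y}_i^{(l)}$ then $j,j'\in\mathcal Y_{\sigma^{(l)}(i)}$.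
   Context: A rich-observation MDP (ROMDP) consists of finite sets of hidden states $\mathcal X=[X]$, observations $\mathcal Y=[Y]$, actions $\mathcal A=[A]$ with $X\le Y$; transitions $T_{i',i,l}=\mathbb P(x'=i'\mid x=i,a=l)$; observation matrix $O_{j,i}=\mathbb P(y=j\mid x=i)$ with each observation $j$ having exactly one hidden state with $O_{j,i}>0$, and $\mathcal Y_i=\{j:O_{j,i}>0\}$; rewards depending on hidden state and action. Policies are deterministic maps $\pi:\mathcal Y\to\mathcal A$. Assumption 1: every such $\pi$ induces an ergodic Markov chain on hidden states. Assumption 2: each $T_{\cdot,\cdot,l}$ is full rank. For policy $\pi$: $\omega_\pi^{(l)}(i)=\mathbb P_\pi(x=i\mid a=l)$ under stationarity; $\mathcal X_\pi^{(l)}=\{i:\omega_\pi^{(l)}(i)>0\}$; with $\vec v_1,\vec v_2,\vec v_3\in\{0,1\}^Y$ the one-hot encodings of three consecutive observations $y_{t-1},y_t,y_{t+1}$ of the stationary process and $x_2,a_2$ the hidden state and action at time $t$, $[V_p^{(l)}]_{j,i}=\mathbb P(\vec v_p=e_j\mid x_2=i,a_2=l)$, in particular $V_2^{(l)}$ has columns indexed by $i\in\mathcal X_\pi^{(l)}$. $K_{p,q}^{(l)}=\mathbb E[\vec v_p\otimes\vec v_q\mid a_2=l]$; symmetrized views $\tilde v_1=K_{2,3}^{(l)}(K_{1,3}^{(l)})^\dagger\vec v_1$, $\tilde v_3=K_{2,1}^{(l)}(K_{3,1}^{(l)})^\dagger\vec v_3$; $M_2^{(l)}=\mathbb E[\tilde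 v_1\otimes\tilde v_3\mid a_2=l]=\sum_{i\in\mathcal X_\pi^{(l)}}\omega_\pi^{(l)}(i)[V_2^{(l)}]_{:,i}\otimes[V_2^{(l)}]_{:,i}$. *)

(* Defs.v *)
From mathcomp Require Import all_boot all_order all_algebra.
Set Implicit Arguments. Unset Strict Implicit. Unset Printing Implicit Defensive.
Import Order.TTheory GRing.Theory Num.Theory.
Local Open Scope ring_scope.

(* Hidden states 'I_X, observations 'I_Y, actions 'I_A.
   Transitions: (T l) i' i = P(x' = i' | x = i, a = l).
   Observations: O j i = P(y = j | x = i).
   Rewards do not enter the statement and are omitted. *)

Definition col_stochastic (R : numDomainType) (m n : nat) (M : 'M[R]_(m, n)) :=
  (forall i j, 0 <= M i j) /\ (forall j, \sum_i M i j = 1).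

Definition is_ROMDP (R : numDomainType) (X Y A : nat)
    (T : 'I_A -> 'M[R]_X) (O : 'M[R]_(Y, X)) : Prop :=
  [/\ (X <= Y)%N,
      (forall l, col_stochastic (T l)),
      col_stochastic O
    & (forall j : 'I_Y, exists! i : 'I_X, 0 < O j i)].

(* Markov chain on hidden states induced by a deterministic policy
   pi : observations -> actions :  P(x' = i' | x = i). *)
Definition chain (R : numDomainType) (X Y A : nat)
    (T : 'I_A -> 'M[R]_X) (O : 'M[R]_(Y, X)) (pi : 'I_Y -> 'I_A) : 'M[R]_X :=
  \matrix_(i', i) \sum_j O j i * T (pi j) i' i.

(* A finite Markov chain (column-stochastic P) is ergodic: irreducible and
   aperiodic, i.e. some power of P has all entries positive. *)
Definition ergodic (R : numDomainType) (X : nat) (P : 'M[R]_X) : Prop :=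
  exists n : nat, forall i' i, 0 < (iter n (mulmx P) 1%:M) i' i.

Definition Assumption1 (R : numDomainType) (X Y A : nat)
    (T : 'I_A -> 'M[R]_X) (O : 'M[R]_(Y, X)) : Prop :=
  forall pi : 'I_Y -> 'I_A, ergodic (chain T O pi).

Definition Assumption2 (R : numFieldType) (X A : nat) (T : 'I_A -> 'M[R]_X) : Prop :=
  forall l, \rank (T l) = X.

Definition stationary (R : numDomainType) (X : nat) (P : 'M[R]_X) (rho : 'I_X -> R) : Prop :=
  [/\ forall i, 0 <= rho i, \sum_i rho i = 1
    & forall i', \sum_i P i' i * rho i = rho i'].

(* P(a = l | x = i) *)
Definition act_given_state (R : numDomainType) (X Y A : nat)
    (O : 'M[R]_(Y, X)) (pi : 'I_Y -> 'I_A) (l : 'I_A) (i : 'I_X) : R :=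
  \sum_(j | pi j == l) O j i.

(* P(a = l) under stationarity *)
Definition prob_action (R : numDomainType) (X Y A : nat)
    (O : 'M[R]_(Y, X)) (pi : 'I_Y -> 'I_A) (rho : 'I_X -> R) (l : 'I_A) : R :=
  \sum_i rho i * act_given_state O pi l i.

(* omega_pi^(l)(i) = P(x = i | a = l) under stationarity *)
Definition omega (R : numFieldType) (X Y A : nat)
    (O : 'M[R]_(Y, X)) (pi : 'I_Y -> 'I_A) (rho : 'I_X -> R) (l : 'I_A) (i : 'I_X) : R :=
  rho i * act_given_state O pi l i / prob_action O pi rho l.

Definition in_Xpi (R : numFieldType) (X Y A : nat)
    (O : 'M[R]_(Y, X)) (pi : 'I_Y -> 'I_A) (rho : 'I_X -> R) (l : 'I_A) (i : 'I_X) : bool :=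
  0 < omega O pi rho l i.

(* [V_2^(l)]_{j,i} = P(y_t = j | x_t = i, a_t = l)  (meaningful for i in X_pi^(l)) *)
Definition V2 (R : numFieldType) (X Y A : nat)
    (O : 'M[R]_(Y, X)) (pi : 'I_Y -> 'I_A) (l : 'I_A) : 'M[R]_(Y, X) :=
  \matrix_(j, i) (O j i * (pi j == l)%:R / act_given_state O pi l i).

Definition M2 (R : numFieldType) (X Y A : nat)
    (O : 'M[R]_(Y, X)) (pi : 'I_Y -> 'I_A) (rho : 'I_X -> R) (l : 'I_A) : 'M[R]_Y :=
  \sum_(i | in_Xpi O pi rho l i)
     omega O pi rho l i *: (col i (V2 O pi l) *m (col i (V2 O pi l))^T).

(* Main.v *)
Require Import Defs.
From mathcomp Require Import all_boot all_order all_algebra.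
Import Order.TTheory GRing.Theory Num.Theory.
Local Open Scope ring_scope.
Set Implicit Arguments. Unset Strict Implicit.

Section Aux.
Variables (R : realFieldType) (X Y A : nat).
Variables (O : 'M[R]_(Y, X)) (pi : 'I_Y -> 'I_A) (rho : 'I_X -> R) (l : 'I_A).

Local Notation V := (V2 O pi l).

Lemma V_O0 j i : O j i = 0 -> V j i = 0.
Proof. by move=> h; rewrite /V2 mxE h !mul0r. Qed.

Lemma V_orth (Onn : forall j i, 0 <= O j i)
  (Ou : forall j : 'I_Y, exists! i : 'I_X, 0 < O j i) i i' :
  i != i' -> (col i V)^T *m col i' V = 0.
Proof.
move=> nii; apply/matrixP=> a b; rewrite !mxE big1 // => j _.
rewrite !mxE.
have [h|h] := eqVneq (O j i) 0; first by rewrite h !mul0r.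
have [h'|h'] := eqVneq (O j i') 0; first by rewrite h' !mul0r mulr0.
have p1 : 0 < O j i by rewrite lt_def h Onn.
have p2 : 0 < O j i' by rewrite lt_def h' Onn.
case: (Ou j) => x [_ hx]; move: nii.
by rewrite -(hx _ p1) -(hx _ p2) eqxx.
Qed.

End Aux.

Theorem lemma9 (R : realFieldType) (X Y A : nat)
    (T : 'I_A -> 'M[R]_X) (O : 'M[R]_(Y, X)) (pi : 'I_Y -> 'I_A)
    (rho : 'I_X -> R) (l : 'I_A)
    (U : 'M[R]_Y) (d : 'I_Y -> R) (idx : 'I_X -> 'I_Y) :
  is_ROMDP T O ->
  Assumption1 T O ->
  Assumption2 T ->
  stationary (chain T O pi) rho ->
  (* eigendecomposition M2 = U Sigma U^T, U orthogonal, Sigma = diag d *)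
  U^T *m U = 1%:M ->
  M2 O pi rho l = U *m diag_mx (\row_k d k) *m U^T ->
  (* all nonzero eigenvalues have multiplicity 1 *)
  (forall k k', d k != 0 -> d k = d k' -> k = k') ->
  (* the eigenvectors of nonzero eigenvalues are indexed by i in X_pi^(l) via idx *)
  (forall i i', in_Xpi O pi rho l i -> in_Xpi O pi rho l i' -> idx i = idx i' -> i = i') ->
  (forall k, d k != 0 <-> exists i, in_Xpi O pi rho l i /\ idx i = k) ->
  exists (sigma : 'I_X -> 'I_X) (C : 'I_X -> R),
    (forall i, in_Xpi O pi rho l i ->
       [/\ in_Xpi O pi rho l (sigma i), C i != 0
         & forall j, V2 O pi l j (sigma i) = C i * U j (idx i)]) /\
    (forall i, in_Xpi O pi rho l i ->
       forall j j', 0 < U j (idx i) -> 0 < U j' (idx i) ->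
         0 < O j (sigma i) /\ 0 < O j' (sigma i)).
Proof.
move=> [_ _ [Onn _] Ou] _ _ _ UtU hM2 dmul _ hidx.
set V := V2 O pi l.
set P := in_Xpi O pi rho l.
set om := omega O pi rho l.
set D := diag_mx (\row_k d k).
pose v i := col i V.
have UUt : U *m U^T = 1%:M by apply: mulmx1C.
have M2E : M2 O pi rho l = \sum_(i | P i) om i *: (v i *m (v i)^T) by [].
have S1 : U^T *m M2 O pi rho l *m U = D.
  by rewrite hM2 !mulmxA UtU mul1mx -mulmxA UtU mulmx1.
have S2 : U^T *m M2 O pi rho l *m U =
   \sum_(i | P i) om i *: ((U^T *m v i) *m (U^T *m v i)^T).
  rewrite M2E mulmx_sumr mulmx_suml; apply: eq_bigr => i _.
  by rewrite -scalemxAr -scalemxAl trmx_mul trmxK !mulmxA.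
have ex3 : forall k, d k != 0 -> exists i', P i' && ((U^T *m v i') k 0 != 0).
  move=> k dk; apply/existsP; apply: contraNT dk; rewrite negb_exists => /forallP H.
  have e : D k k = (\sum_(i | P i) om i *: ((U^T *m v i) *m (U^T *m v i)^T)) k k.
    by rewrite -S1 S2.
  rewrite /D mxE mxE eqxx mulr1n summxE big1 in e; first by rewrite e.
  move=> i Pi; have := H i; rewrite Pi /= negbK => /eqP h0.
  rewrite mxE [X in _ * X]mxE big_ord1 [X in _ * (_ * X)]mxE h0.
  by rewrite mul0r mulr0.
have S4 : forall i', P i' -> exists lam, M2 O pi rho l *m v i' = lam *: v i'.
  move=> i' Pi'; exists (om i' * ((v i')^T *m v i') 0 0).
  rewrite M2E mulmx_suml (bigD1 i') //= big1 => [|i /andP[_ nii]].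
    rewrite addr0 -scalemxAl -mulmxA.
    have -> : v i' *m ((v i')^T *m v i') = ((v i')^T *m v i') 0 0 *: v i'.
      by rewrite {1}(mx11_scalar ((v i')^T *m v i')) mul_mx_scalar.
    by rewrite scalerA.
  by rewrite -scalemxAl -mulmxA (V_orth pi l Onn Ou nii) mulmx0 scaler0.
have UM : U^T *m M2 O pi rho l = D *m U^T.
  by rewrite hM2 !mulmxA UtU mul1mx.
have key : forall i' k, P i' -> d k != 0 -> (U^T *m v i') k 0 != 0 ->
    forall j, V j i' = (U^T *m v i') k 0 * U j k.
  move=> i' k Pi' dk yk j.
  have [lam hl] := S4 i' Pi'.
  have S5 : D *m (U^T *m v i') = lam *: (U^T *m v i').
    by rewrite mulmxA -UM -mulmxA hl scalemxAr.
  have S6 : forall k', d k' * (U^T *m v i') k' 0 = lam * (U^T *m v i') k' 0.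
    move=> k'; have := congr1 (fun M : 'cV_Y => M k' 0) S5.
    by rewrite /= /D mul_diag_mx !mxE.
  have dkl : d k = lam by apply: (mulIf yk); rewrite S6.
  have y0 : forall k', k' != k -> (U^T *m v i') k' 0 = 0.
    move=> k' nk; apply/eqP; apply: contraNT nk => nz; apply/eqP.
    apply: esym; apply: dmul dk _.
    by apply: (mulIf nz); rewrite S6 dkl.
  have vE : v i' = U *m (U^T *m v i') by rewrite mulmxA UUt mul1mx.
  have eq1 : V j i' = (U *m (U^T *m v i')) j 0.
    by rewrite -vE /v [RHS]mxE.
  rewrite eq1 mxE (bigD1 k) // big1 ?addr0.
  - by rewrite /= addr0 mulrC.
  - by move=> k' /= nk; rewrite y0 // mulr0.
pose sigma i := odflt i [pick i' | P i' && ((U^T *m v i') (idx i) 0 != 0)].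
pose C i := (U^T *m v (sigma i)) (idx i) 0.
have main : forall i, P i -> [/\ P (sigma i), C i != 0
         & forall j, V j (sigma i) = C i * U j (idx i)].
  move=> i Pi.
  have dk : d (idx i) != 0 by apply/hidx; exists i.
  rewrite /C /sigma; case: pickP => [i' /andP[Pi' nz] | none] /=.
    by split => // j; apply: key.
  have [i' hi'] := ex3 _ dk.
  by move: (none i'); rewrite hi'.
exists sigma, C; split => // i Pi j j' hj hj'.
have [_ Cnz hV] := main i Pi.
have pos : forall j, 0 < U j (idx i) -> 0 < O j (sigma i).
  move=> j0 h0; rewrite lt_def Onn andbT; apply/eqP => O0.
  have := hV j0; rewrite /V /V2 mxE O0 !mul0r => /esym/eqP.
  by rewrite mulf_eq0 (negPf Cnz) /= gt_eqF.
by split; apply: pos.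
Qed.
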